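(* Let $x\ge 0$ and $y$ be integers with $M(x,y)\neq\emptyset$, and let $G_0$ be a minimal graph in $M(x,y)$. If $G_0$ is nonseparable, then (a) $|V(G_0)|=4f(G_0)-2x-1$; (b) $4f(G_0)-2x-1<R(f(G_0)-x+1,3)$.
   Context: All graphs are finite, simple and undirected; the empty graph (with no vertices) is allowed, with $\chi=\mathrm{cl}=0$. $\mathrm{cl}(G)$ is the clique number, $\chi(G)$ the chromatic number, and $f(G)=\chi(G)-\mathrm{cl}(G)$. For integers $x,y$, $M(x,y)=\{G: |V(G)|<\chi(G)+2f(G)-x \text{ and } f(G)\le y\}$. A graph $G_0$ in a nonempty set $\mathcal M$ of graphs is minimal in $\mathcal M$ if $|V(G_0)|=\min\{|V(G)|:G\in\mathcal M\}$. For vertex-disjoint graphs $G_1,G_2$, $G_1+G_2$ is the graph on $V(G_1)\cup V(G_2)$ whose edges are those of $G_1$, those of $G_2$, and all pairs $\{u,v\}$ with $u\in V(G_1)$, $v\in V(G_2)$ (the join). $G$ is separable if $G=G_1+G_2$ with $V(G_1)\neq\emptyset$ and $V(G_2)\neq\emptyset$; otherwise nonseparable. $R(p,3)$ is the least $n$ such that every graph on at least $n$ vertices has a $p$-clique or an independent set of size $3$. *)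

(* Defs.v *)
From HB Require Import structures.
From mathcomp Require Import all_boot all_order all_algebra.
Set Implicit Arguments. Unset Strict Implicit. Unset Printing Implicit Defensive.
Import Order.TTheory GRing.Theory Num.Theory.
Local Open Scope ring_scope.
Local Open Scope nat_scope.

Record sgraph := SGraph {
  nv : nat;
  adj : rel 'I_nv;
  adj_sym : symmetric adj;
  adj_irr : irreflexive adj }.

Section Graph.
Variable G : sgraph.

Definition is_clique (K : {set 'I_(nv G)}) : bool :=
  [forall u in K, forall v in K, (u != v) ==> @adj G u v].

Definition is_indep (I : {set 'I_(nv G)}) : bool :=
  [forall u in I, forall v in I, ~~ @adj G u v].

Definition cl : nat := \max_(K : {set 'I_(nv G)} | is_clique K) #|K|.

Definition colorable (k : nat) : bool :=
  [exists c : {ffun 'I_(nv G) -> 'I_k},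
     [forall u, forall v, @adj G u v ==> (c u != c v)]].

(* chromatic number: least k <= nv G such that G is k-colourable
   (G is always nv G-colourable, so this is the least k overall). *)
Definition chi : nat := \big[minn/nv G]_(k < (nv G).+1 | colorable k) k.

Definition f : int := (chi%:Z - cl%:Z)%R.

(* G = G1 + G2 with both parts nonempty: the vertex set splits into two
   nonempty parts A, ~A with every vertex of A adjacent to every vertex of ~A
   (G1, G2 are then the induced subgraphs on A and ~A). *)
Definition separable : Prop :=
  exists A : {set 'I_(nv G)},
    A != set0 /\ ~: A != set0 /\
    (forall u v, u \in A -> v \notin A -> @adj G u v).

End Graph.

Definition inM (x y : int) (G : sgraph) : Prop :=
  ((nv G)%:Z < (chi G)%:Z + 2 * f G - x)%R /\ (f G <= y)%R.

Definition ramsey_ok (p : int) (m : nat) : Prop :=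
  forall G : sgraph, m <= nv G ->
    (exists K : {set 'I_(nv G)}, is_clique K /\ (#|K|%:Z = p)) \/
    (exists I : {set 'I_(nv G)}, is_indep I /\ #|I| = 3).

Definition is_R3 (p : int) (r : nat) : Prop :=
  ramsey_ok p r /\ forall m, ramsey_ok p m -> r <= m.

(* Main.v *)
Require Import Defs.
From HB Require Import structures.
From mathcomp Require Import all_boot all_order all_algebra.
From Stdlib Require Import Lia.
Set Implicit Arguments. Unset Strict Implicit. Unset Printing Implicit Defensive.
Import Order.TTheory GRing.Theory Num.Theory.

Section Sub.
Variable G : sgraph.
Local Notation n := (nv G).
Local Notation V := ('I_n).
Local Notation E := (@adj G).
Implicit Types (R I K : {set V}).

Lemma Esym u v : E u v = E v u.
Proof. exact: adj_sym. Qed.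
Lemma Eirr u : E u u = false.
Proof. exact: adj_irr. Qed.
Lemma Eneq u v : E u v -> u != v.
Proof. by apply: contraTneq => ->; rewrite Eirr. Qed.

Definition colS (R : {set V}) (k : nat) : bool :=
  [exists c : {ffun V -> 'I_n.+1},
     [forall u in R, c u < k] && [forall u in R, forall v in R, E u v ==> (c u != c v)]].

Lemma colS_intro R k (c : V -> nat) :
  (forall u, u \in R -> c u < k) ->
  (forall u v, u \in R -> v \in R -> E u v -> c u <> c v) ->
  (forall u, u \in R -> c u <= n) -> colS R k.
Proof.
move=> ck cp cn; apply/existsP; exists [ffun u => inord (c u)].
apply/andP; split.
  by apply/forallP=> u; apply/implyP=> uR; rewrite ffunE inordK ?ck // ltnS cn.
apply/forallP=> u; apply/implyP=> uR; apply/forallP=> v; apply/implyP=> vR.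
apply/implyP=> Euv; rewrite !ffunE; apply/negP=> /eqP/(congr1 (@nat_of_ord _)).
by rewrite !inordK ?ltnS ?cn //; apply: cp.
Qed.

Lemma colS_elim R k : colS R k -> exists c : V -> nat,
  [/\ (forall u, u \in R -> c u < k),
      (forall u v, u \in R -> v \in R -> E u v -> c u <> c v) &
      (forall u, c u <= n)].
Proof.
case/existsP=> c /andP[/forallP ck /forallP cp].
exists (fun u => val (c u)); split.
- by move=> u uR; move/implyP: (ck u); apply.
- move=> u v uR vR Euv /val_inj/eqP; apply/negP.
  by move/implyP: (cp u) => /(_ uR)/forallP/(_ v)/implyP/(_ vR)/implyP; apply.
- by move=> u; rewrite -ltnS ltn_ord.
Qed.

Lemma colS_n R : colS R n.
Proof.
apply: (@colS_intro _ _ (fun u => val u)) => [u _|u v _ _ Euv /val_inj|u _].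
- exact: ltn_ord.
- by move=> e; move: Euv; rewrite e Eirr.
- exact: ltnW (ltn_ord u).
Qed.

Definition chiS (R : {set V}) : nat := ex_minn (ex_intro (colS R) n (colS_n R)).

Lemma chiS_col R : colS R (chiS R).
Proof. by rewrite /chiS; case: ex_minnP. Qed.

Lemma chiS_min R k : colS R k -> chiS R <= k.
Proof. by rewrite /chiS; case: ex_minnP => m _ H; apply: H. Qed.

Lemma chiS_le_n R : chiS R <= n.
Proof. exact/chiS_min/colS_n. Qed.

Lemma colS_sub R1 R2 k : R1 \subset R2 -> colS R2 k -> colS R1 k.
Proof.
move=> sub /colS_elim[c [ck cp cn]].
apply: (@colS_intro _ _ c) => [u uR|u v uR vR|u _]; last exact: cn.
- by apply: ck; apply: (subsetP sub).
- by apply: cp; apply: (subsetP sub).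
Qed.

Lemma chiS_mono R1 R2 : R1 \subset R2 -> chiS R1 <= chiS R2.
Proof. by move=> sub; apply/chiS_min/(colS_sub sub)/chiS_col. Qed.

Definition indep (I : {set V}) := forall u v, u \in I -> v \in I -> ~~ E u v.

Lemma chiS_indep R I : indep I -> chiS R <= (chiS (R :\: I)).+1.
Proof.
move=> Ii; apply: chiS_min.
have /colS_elim[c [ck cp cn]] := chiS_col (R :\: I).
apply: (@colS_intro _ _ (fun u => if u \in I then chiS (R :\: I) else c u)).
- move=> u uR; case: ifP => uI //; apply: ltnW; rewrite ltnS; apply: ck.
  by rewrite inE uI uR.
- move=> u v uR vR Euv; case: ifP => uI; case: ifP => vI.
  + by move: (Ii u v uI vI); rewrite Euv.
  + move=> e; have := ck v; rewrite inE vI vR /= => /(_ isT); rewrite -e ltnn //.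
  + move=> e; have := ck u; rewrite inE uI uR /= => /(_ isT); rewrite e ltnn //.
  + by apply: cp => //; rewrite inE ?uI ?vI ?uR ?vR.
- by move=> u _; case: ifP => _; [apply: chiS_le_n|apply: cn].
Qed.

Lemma chiS_small R : #|R| <= 1 -> chiS R <= 1.
Proof.
move=> Rs; apply: chiS_min; apply: (@colS_intro _ _ (fun _ => 0)) => //.
- move=> u v uR vR Euv _; have : #|[set u; v]| <= 1.
    by apply: leq_trans Rs; apply: subset_leq_card; apply/subsetP=> w; rewrite !inE => /orP[]/eqP->.
  by rewrite cards2 (Eneq Euv).
Qed.

Lemma chiS_setT R : chiS setT <= chiS R + #|~: R|.
Proof.
move Hk: #|~: R| => k; elim: k R Hk => [|k IH] R Hk.
  have -> : R = setT by apply/setP=> v; rewrite inE; apply/negPn; move/eqP: Hk; rewrite cards_eq0 => /eqP/setP/(_ v); rewrite !inE => ->.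
  by rewrite addn0.
have : 0 < #|~: R| by rewrite Hk.
case/card_gt0P=> v; rewrite inE => vR.
have Hk' : #|~: (v |: R)| = k.
  have : #|~: R| = #|~: (v |: R)| + 1.
    rewrite (cardsD1 v (~: R)) inE vR add1n addn1; congr _.+1.
    by apply: eq_card => w; rewrite !inE negb_or.
  by rewrite Hk addn1 => -[].
apply: leq_trans (IH _ Hk') _.
have : chiS (v |: R) <= (chiS ((v |: R) :\: [set v])).+1.
  by apply: chiS_indep => a b; rewrite !inE => /eqP-> /eqP->; rewrite Eirr.
have -> : (v |: R) :\: [set v] = R.
  apply/setP=> w; rewrite !inE; case: eqP => [->|] //=; by rewrite (negbTE vR).
by move=> h; rewrite addnS -addSn leq_add2r.
Qed.

Definition clS (R : {set V}) : nat :=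
  \max_(K : {set V} | (K \subset R) && is_clique K) #|K|.

Lemma cliqueP K : reflect (forall u v, u \in K -> v \in K -> u != v -> E u v) (is_clique K).
Proof.
apply: (iffP forallP) => [H u v uK vK uv|H u].
  by move/implyP: (H u) => /(_ uK)/forallP/(_ v)/implyP/(_ vK)/implyP; apply.
apply/implyP=> uK; apply/forallP=> v; apply/implyP=> vK; apply/implyP; exact: H.
Qed.

Lemma clS_max R K : K \subset R -> is_clique K -> #|K| <= clS R.
Proof. by move=> s c; apply: (leq_bigmax_cond K); rewrite s c. Qed.

Lemma clS_ex R : exists K, [/\ K \subset R, is_clique K & #|K| = clS R].
Proof.
have : 0 < #|[pred K : {set V} | (K \subset R) && is_clique K]|.
  apply/card_gt0P; exists set0; rewrite inE sub0set /=; apply/cliqueP=> u v; by rewrite inE.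
case/(eq_bigmax_cond (fun K : {set V} => #|K|)) => K; rewrite inE => /andP[s c] e.
by exists K; split=> //; rewrite /clS -e.
Qed.

Lemma clS_mono R1 R2 : R1 \subset R2 -> clS R1 <= clS R2.
Proof.
move=> s; have [K [sK cK <-]] := clS_ex R1; apply: clS_max cK.
exact: subset_trans s.
Qed.

Lemma clS_indep R I : indep I -> clS R <= (clS (R :\: I)).+1.
Proof.
move=> Ii; have [K [sK cK <-]] := clS_ex R.
rewrite -(cardsID I K) addnC -addn1 leq_add //.
  apply: clS_max; first by apply/subsetP=> w; rewrite !inE => /andP[-> /(subsetP sK) ->].
  apply/cliqueP => u v; rewrite !inE => /andP[_ uK] /andP[_ vK]; exact: (cliqueP _ cK).
rewrite leqNgt; apply/negP=> /card_gt1P[u [v [uK vK uv]]].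
move: uK vK; rewrite !inE => /andP[uK uI] /andP[vK vI].
by move: (Ii u v uI vI); rewrite ((cliqueP _ cK) u v uK vK uv).
Qed.

Lemma clS_pos R v : v \in R -> 1 <= clS R.
Proof.
move=> vR; have := @clS_max R [set v]; rewrite cards1; apply.
  by rewrite sub1set.
by apply/cliqueP=> a b; rewrite !inE => /eqP-> /eqP->; rewrite eqxx.
Qed.

End Sub.

Ltac natlia := intros;
  repeat match goal with
  | H : is_true (~~ (_ <= _)) |- _ => rewrite -ltnNge in H
  | H : is_true (_ <= _) |- _ => apply (elimT ssrnat.leP) in H
  | H : context [addn] |- _ => rewrite -plusE in H
  | H : context [subn] |- _ => rewrite -minusE in H
  | H : context [muln] |- _ => rewrite -multE in H
  end;
  try (match goal with |- is_true (_ <= _) => apply/ssrnat.leP end);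
  rewrite -?plusE -?minusE -?multE;
  lia.

Ltac abs_atoms := repeat match goal with
  | |- context [chiS ?R] => let a := fresh "a" in set a := chiS R
  | |- context [clS ?R] => let a := fresh "b" in set a := clS R
  | |- context [#|?R|] => let a := fresh "c" in set a := #|R|
  end.

Ltac alia := abs_atoms; natlia.



Lemma bigmin_le (I : eqType) (s : seq I) (P : pred I) (F : I -> nat) N x :
  x \in s -> P x -> \big[minn/N]_(i <- s | P i) F i <= F x.
Proof.
elim: s => // a s IH; rewrite inE big_cons => /orP[/eqP<- ->|xs Px].
  exact: geq_minl.
case: ifP => _; last exact: IH.
by apply: leq_trans (geq_minr _ _) (IH xs Px).
Qed.

Lemma bigmin_P (I : eqType) (s : seq I) (P : pred I) (Q : pred nat) (F : I -> nat) N :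
  Q N -> (forall i, P i -> Q (F i)) -> Q (\big[minn/N]_(i <- s | P i) F i).
Proof.
move=> QN QF; apply: (big_rec (fun m => Q m)) => // i x Pi Qx.
by rewrite /minn; case: ifP => _ //; apply: QF.
Qed.

Lemma colorable_nv (H : sgraph) : colorable H (nv H).
Proof.
  apply/existsP; exists [ffun i => i]; apply/forallP=> u; apply/forallP=> v.
  by apply/implyP=> e; rewrite !ffunE; apply: contraTneq e => ->; rewrite adj_irr.
Qed.

Lemma chi_spec (H : sgraph) : colorable H (chi H) /\ (forall k, colorable H k -> chi H <= k).
Proof.
have cn := colorable_nv H.
split; first by apply: bigmin_P => // i.
move=> k ck; case: (leqP k (nv H)) => kn.
  have := @bigmin_le _ (index_enum 'I_(nv H).+1) (fun i : 'I_(nv H).+1 => colorable H i)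
     (fun i => val i) (nv H) (Ordinal (kn : k < (nv H).+1)).
  by move/(_ (mem_index_enum _) ck).
apply: leq_trans (ltnW kn); rewrite /chi.
by apply: (@bigmin_P _ _ _ (fun m => m <= nv H)) => // i _; rewrite -ltnS ltn_ord.
Qed.

Section Transfer.
Variable G : sgraph.
Local Notation n := (nv G).
Local Notation V := ('I_n).
Local Notation E := (@adj G).

Lemma transfer (H : sgraph) (phi : 'I_(nv H) -> V) :
  injective phi -> (forall i j, @adj H i j = E (phi i) (phi j)) ->
  [/\ nv H = #|phi @: setT|, chi H = chiS (phi @: setT) & cl H = clS (phi @: setT)].
Proof.
move=> phiI phiE; set R := phi @: setT.
have nvR : nv H = #|R| by rewrite card_imset // cardsT card_ord.
have Rn : #|R| <= n by apply: leq_trans (max_card _) _; rewrite card_ord.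
split=> //.
- have [colH minH] := chi_spec H.
  apply/eqP; rewrite eqn_leq; apply/andP; split.
    apply: minH; have /colS_elim[c [ck cp cn]] := chiS_col R.
    apply/existsP.
    have ck' : forall i, c (phi i) < chiS R by move=> i; apply: ck; apply: imset_f.
    exists [ffun i => Ordinal (ck' i)]; apply/forallP=> u; apply/forallP=> v.
    apply/implyP=> e; rewrite !ffunE; apply/negP=> /eqP/(congr1 (@nat_of_ord _)) /=.
    by apply: cp; rewrite ?imset_f // -phiE.
  apply: chiS_min; case/existsP: colH => c /forallP cp.
  pose c' (v : V) := if [pick i | phi i == v] is Some i then val (c i) else 0.
  have c'E i : c' (phi i) = c i.
    rewrite /c'; case: pickP => [j /eqP/phiI -> //|/(_ i)]; by rewrite eqxx.
  apply: (@colS_intro _ _ _ c').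
  + by move=> u /imsetP[i _ ->]; rewrite c'E ltn_ord.
  + move=> u v /imsetP[i _ ->] /imsetP[j _ ->]; rewrite -phiE !c'E => e /val_inj/eqP.
    by apply/negP; move/forallP: (cp i) => /(_ j)/implyP; apply.
  + move=> u /imsetP[i _ ->]; rewrite c'E; apply: leq_trans (ltnW (ltn_ord _)) _.
    apply: leq_trans (proj2 (chi_spec H) _ (colorable_nv H)) _.
    by rewrite nvR.
- apply/eqP; rewrite eqn_leq; apply/andP; split.
    apply/bigmax_leqP=> K cK.
    rewrite -(card_imset K phiI); apply: clS_max.
      by apply/subsetP=> v /imsetP[i _ ->]; apply: imset_f.
    apply/cliqueP=> u v /imsetP[i iK ->] /imsetP[j jK ->] ne.
    rewrite -phiE; move/forallP: cK => /(_ i)/implyP/(_ iK)/forallP/(_ j)/implyP/(_ jK)/implyP.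
    by apply; apply: contraNneq ne => ->.
  have [K [sK cK <-]] := clS_ex R.
  have eK : phi @: (phi @^-1: K) = K.
    apply/setP=> v; apply/imsetP/idP => [[i]|vK]; first by rewrite inE => iK ->.
    have := subsetP sK v vK; case/imsetP=> i _ e; exists i => //; by rewrite inE -e.
  rewrite -eK card_imset //; apply: (leq_bigmax_cond (phi @^-1: K)).
  apply/forallP=> i; apply/implyP; rewrite inE => iK; apply/forallP=> j; apply/implyP.
  rewrite inE => jK; apply/implyP=> ne; rewrite phiE.
  apply: (cliqueP _ cK) => //; apply: contra_neq ne; exact: phiI.
Qed.
End Transfer.

Section Inv.
Variable G : sgraph.
Local Notation n := (nv G).
Local Notation V := ('I_n).
Local Notation E := (@adj G).
Implicit Types (R I K : {set V}) (p q : V -> V).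

Definition valid p := (forall v, p (p v) = v) /\ (forall v, p v != v -> ~~ E v (p v)).
Definition fixS p R := [set v in R | p v == v].
Definition Tset p R := [set v in R | (v <= p v)%N].
Definition pclosed p R := forall v, v \in R -> p v \in R.

Lemma ord_neq_lt (u v : V) : u != v -> (u < v)%N || (v < u)%N.
Proof. by move=> uv; rewrite -neq_ltn. Qed.

Lemma count_inv p R : (forall v, p (p v) = v) -> pclosed p R ->
  #|R| + #|fixS p R| = 2 * #|Tset p R|.
Proof.
move=> pp cR.
have pinj : injective p by apply: (can_inj pp).
set F := fixS p R; set T := Tset p R.
set T1 := [set v in R | (v < p v)%N]; set T2 := [set v in R | (p v < v)%N].
have eT : #|T| = #|F| + #|T1|.
  rewrite -(cardsID F T); congr (_ + _); apply: eq_card => v; rewrite !inE -!val_eqE;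
  by case: (v \in R); case: ltngtP.
have eR : #|R| = #|F| + #|T1| + #|T2|.
  rewrite -(cardsID F R) -addnA; congr (_ + _).
    by apply: eq_card => v; rewrite !inE; case: (v \in R).
  rewrite -(cardsID T1 (R :\: F)); congr (_ + _); apply: eq_card => v; rewrite !inE -!val_eqE;
  by case: (v \in R); case: ltngtP.
have e12 : #|T2| = #|T1|.
  rewrite -(card_imset T1 pinj); apply: eq_card => v; rewrite inE.
  apply/andP/imsetP => [[vR lt]|[w]]; first by exists (p v); rewrite ?inE ?pp ?cR.
  by rewrite inE => /andP[wR lt] ->; rewrite pp cR.
rewrite eR eT e12; move: #|F| #|T1| => a b.
by rewrite mul2n -addnn addnAC -!addnA (addnC b).
Qed.

Lemma chi_inv p R : valid p -> pclosed p R -> 2 * chiS R <= #|R| + #|fixS p R|.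
Proof.
move=> [pp pv] cR; rewrite count_inv // leq_mul2l /=.
have pinj : injective p by apply: (can_inj pp).
set T := Tset p R.
pose m (v : V) := if (v <= p v)%N then v else p v.
have mE v : m v = v \/ m v = p v by rewrite /m; case: ifP; [left|right].
have mT v : v \in R -> m v \in T.
  move=> vR; rewrite /m; case: ifP => h; rewrite inE ?vR ?h // cR //= pp.
  by rewrite ltnW // ltnNge h.
pose rk (v : V) := #|[set w in T | (w < m v)%N]|.
have rk_lt v : v \in R -> rk v < #|T|.
  move=> vR; apply: proper_card; apply/properP; split.
    by apply/subsetP=> w; rewrite inE => /andP[].
  by exists (m v); rewrite ?mT // inE ltnn andbF.
have rk_mono u v : u \in R -> v \in R -> (m u < m v)%N -> rk u < rk v.
  move=> uR vR lt; apply: proper_card; apply/properP; split.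
    by apply/subsetP=> w; rewrite !inE => /andP[-> /= h]; apply: ltn_trans h lt.
  by exists (m u); rewrite inE (mT u uR) //= ltnn.
apply: chiS_min.
apply: (@colS_intro _ _ _ rk) => [v vR|u v uR vR Euv e|v _]; first exact: rk_lt.
- have emu : m u = m v.
    case: (ltngtP (m u) (m v)) => h; last exact: val_inj.
      by move: (rk_mono _ _ uR vR h); rewrite e ltnn.
    by move: (rk_mono _ _ vR uR h); rewrite e ltnn.
  have nE : forall a, p a != a -> ~~ E (p a) a by move=> a /pv; rewrite adj_sym.
  have Eu := Euv.
  case: (mE u) emu => ->; case: (mE v) => ->.
  + by move=> e1; move: Euv; rewrite e1 adj_irr.
  + move=> e1; have : p v != v by apply: contraTneq Euv => h; rewrite e1 h adj_irr.
    by move/nE; rewrite -e1 Euv.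
  + move=> e1; have : p u != u by apply: contraTneq Euv => h; rewrite -e1 h adj_irr.
    by move/pv; rewrite e1 Euv.
  + by move/pinj=> e1; move: Euv; rewrite e1 adj_irr.
- by apply: leq_trans (max_card _) _; rewrite card_ord.
Qed.

Lemma triple_indep (c : V -> nat) R u v w :
  (forall a b, a \in R -> b \in R -> E a b -> c a <> c b) ->
  (forall I, indep I -> #|I| <= 2) ->
  u \in R -> v \in R -> w \in R -> c u = c v -> c v = c w ->
  u != v -> v != w -> w != u -> False.
Proof.
move=> cp a2 uR vR wR e1 e2 n1 n2 n3.
have : 2 < #|[set u; v; w]|.
  apply/card_gt2P; exists u, v, w; rewrite !inE !eqxx ?orbT; split => //.
have h3 : #|[set u; v; w]| <= 2.
  apply: a2 => a b; rewrite !inE => ha hb; apply/negP=> Eab.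
  have [aR ca] : a \in R /\ c a = c u by case/orP: ha => [/orP[]|] /eqP->; split; rewrite // ?e1 ?e2.
  have [bR cb] : b \in R /\ c b = c u by case/orP: hb => [/orP[]|] /eqP->; split; rewrite // ?e1 ?e2.
  by apply: (cp a b aR bR Eab); rewrite ca cb.
by rewrite ltnNge h3.
Qed.

Lemma inv_of_col R k : (forall I, indep I -> #|I| <= 2) -> colS R k ->
  exists p, [/\ valid p, pclosed p R, (forall v, v \notin R -> p v = v) &
                #|R| + #|fixS p R| <= 2 * k].
Proof.
move=> a2 /colS_elim[c [ck cp cn]].
have tri := triple_indep cp a2.
pose p v := if v \in R then
   (if [pick w in R | (w != v) && (c w == c v)] is Some w then w else v) else v.
have pP v : v \in R ->
   (p v = v /\ forall w, w \in R -> w != v -> c w <> c v) \/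
   [/\ p v \in R, p v != v & c (p v) = c v].
  move=> vR; rewrite /p vR; case: pickP => [w /andP[wR /andP[wv /eqP cw]]|none].
    by right.
  left; split => // w wR wv cw; move: (none w); by rewrite wR wv cw eqxx.
have pout v : v \notin R -> p v = v by rewrite /p => /negbTE->.
have pp v : p (p v) = v.
  case: (boolP (v \in R)) => vR; last by rewrite !pout.
  case: (pP v vR) => [[e _]|[wR wv cw]]; first by rewrite e e.
  case: (pP _ wR) => [[_ /(_ v vR)]|[w'R w'w cw']].
    by move=> h; exfalso; apply: h; rewrite // eq_sym.
  case: (eqVneq (p (p v)) v) => // ne; exfalso.
  by apply: (tri v (p v) (p (p v))) => //; rewrite ?cw' ?cw // eq_sym.
have cl : pclosed p R by move=> v vR; case: (pP v vR) => [[->]|[]].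
exists p; split => //.
  split => // v ne; case: (boolP (v \in R)) => vR; last by rewrite pout ?eqxx in ne.
  case: (pP v vR) => [[e _]|[wR _ cw]]; first by rewrite e eqxx in ne.
  by apply/negP=> Ev; apply: (cp _ _ vR wR Ev).
rewrite count_inv // leq_mul2l /=.
set T := Tset p R.
have cinj : {in T &, injective c}.
  move=> u v; rewrite !inE => /andP[uR up] /andP[vR vp] cuv.
  case: (eqVneq u v) => // uv; exfalso.
  have puv : p u = v.
    case: (pP u uR) => [[_ h]|[wR wu cw]].
      by exfalso; apply: (h v vR); rewrite // eq_sym.
    case: (eqVneq (p u) v) => // ne; exfalso.
    by apply: (tri u v (p u) uR vR wR cuv) => //; [rewrite cw cuv|rewrite eq_sym].
  have pvu : p v = u by rewrite -puv pp.
  move: up vp; rewrite puv pvu => h1 h2; move/eqP: uv; apply; apply: val_inj.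
  by apply/eqP; rewrite eqn_leq h1 h2.
case: k ck => [|k] ck.
  rewrite leqn0 cards_eq0; apply/eqP/setP=> v; rewrite !inE.
  by apply/negP=> /andP[vR _]; move: (ck v vR).
have := @leq_card_in _ _ (fun v => inord (c v) : 'I_k.+1) T.
rewrite card_ord; apply => u v uT vT /(congr1 (@nat_of_ord _)).
have uR : u \in R by move: uT; rewrite inE => /andP[].
have vR : v \in R by move: vT; rewrite inE => /andP[].
by rewrite !inordK ?ck //; apply: cinj.
Qed.

End Inv.

Lemma iter_period (T : finType) (f : T -> T) (finj : injective f) x m :
  (iter m f x == x) = (order f x %| m).
Proof.
set L := order f x.
have L0 : 0 < L by apply: order_gt0.
have itL k : iter (k * L) f x = x.
  elim: k => [|k IH] //; by rewrite mulSn iterD IH iter_order.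
rewrite {1}(divn_eq m L) addnC iterD itL /dvdn.
case: (eqVneq (m %% L) 0) => [->|ne] //=; first by rewrite eqxx.
apply/negP=> /eqP e.
have := findex_iter (ltn_pmod m L0); rewrite e findex0 => h.
by rewrite -h eqxx in ne.
Qed.

Section Orbit.
Variables (T : finType) (p q : T -> T).
Hypothesis pp : forall v, p (p v) = v.
Hypothesis qq : forall v, q (q v) = v.
Let r := fun v => q (p v).
Lemma r_inj : injective r.
Proof. by move=> a b; rewrite /r => /(can_inj qq)/(can_inj pp). Qed.

Lemma iter_rp k w : iter k r (p (iter k r w)) = p w.
Proof.
elim: k w => [|k IH] w //.
have -> : iter k.+1 r w = r (iter k r w) by [].
by rewrite iterSr {2}/r pp qq IH.
Qed.

Lemma orbit_closed u : p u = u -> forall w, fconnect r u w ->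
  fconnect r u (p w) /\ fconnect r u (q w).
Proof.
move=> pu w uw.
have h : fconnect r u (p w).
  rewrite (fconnect_sym r_inj).
  have := iter_rp (findex r u w) u; rewrite (iter_findex uw) pu => e.
  by rewrite -[X in fconnect r _ X]e fconnect_iter.
split => //.
have : q w = r (p w) by rewrite /r pp.
move=> ->; apply: connect_trans h _; apply: connect1; by rewrite /= eqxx.
Qed.

Lemma orbit_three u v t : p u = u -> p v = v -> u != v -> q t = t ->
  fconnect r u v -> fconnect r u t -> False.
Proof.
move=> pu pv uv qt uv' ut.
set L := order r u.
have L0 : 0 < L by apply: order_gt0.
set k := findex r u v; set j := findex r u t.
have ev : iter k r u = v by apply: iter_findex.
have et : iter j r u = t by apply: iter_findex.
have h1 : L %| k + k.
  rewrite -iter_period; last exact: r_inj.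
  rewrite iterD ev; apply/eqP.
  by have := iter_rp k u; rewrite ev pv pu.
have h2 : ~~ (L %| k) by rewrite /L -(iter_period r_inj) ev eq_sym.
have rpt : r (p t) = t by rewrite /r pp qt.
have h3 : iter (j + j) r u = r u.
  rewrite iterD et -{1}rpt.
  have := iter_rp j u; rewrite et pu => e.
  by rewrite -iterSr iterS e.
have h4 : L %| (j + j) + L.-1.
  rewrite -iter_period; last exact: r_inj.
  by rewrite addnC iterD h3 -iterSr prednK // iter_order //; exact: r_inj.
case: (boolP (odd L)) => oL.
  move: h2; rewrite -(Gauss_dvdr _ (_ : coprime L 2)) ?coprimen2 // mul2n -addnn.
  by rewrite h1.
have : 2 %| L by rewrite dvdn2.
move/dvdn_trans/(_ h4); rewrite dvdn2 oddD addnn odd_double /=.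
by move: oL; rewrite -{1}(prednK L0) /= => /negbNE ->.
Qed.
End Orbit.

Section Gallai.
Variable G : sgraph.
Local Notation n := (nv G).
Local Notation V := ('I_n).
Local Notation E := (@adj G).
Implicit Types (R I K O : {set V}) (p q : V -> V).
Local Notation chiT := (chiS [set: V]).

Definition Opt p := valid p /\ #|fixS p [set: V]| + n <= 2 * chiT.

Lemma closedT p : pclosed p [set: V].
Proof. by move=> v; rewrite !inE. Qed.

Lemma opt_lb p : valid p -> 2 * chiT <= n + #|fixS p [set: V]|.
Proof. by move=> vp; have := chi_inv vp (@closedT p); rewrite cardsT card_ord. Qed.

Lemma aug p a b : Opt p -> p a = a -> p b = b -> a != b -> E a b.
Proof.
move=> [[pp pv] op] pa pb ab; apply/negPn/negP => nE.
pose p' v := if v == a then b else if v == b then a else p v.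
have ba : b != a by rewrite eq_sym.
have vp' : valid p'.
  split.
    move=> v; rewrite /p'; case: (eqVneq v a) => [->|va]; first by rewrite (negbTE ba) eqxx.
    case: (eqVneq v b) => [->|vb]; first by rewrite eqxx.
    have -> : (p v == a) = false by apply/eqP=> e; move/eqP: va; apply; rewrite -[v]pp e pa.
    have -> : (p v == b) = false by apply/eqP=> e; move/eqP: vb; apply; rewrite -[v]pp e pb.
    exact: pp.
  move=> v; rewrite /p'; case: (eqVneq v a) => [->|va] //.
  case: (eqVneq v b) => [->|vb]; first by rewrite adj_sym.
  exact: pv.
have fE : fixS p' [set: V] = (fixS p [set: V]) :\ a :\ b.
  apply/setP=> v; rewrite !inE /p'.
  case: (eqVneq v a) => [->|va] /=; first by rewrite (negbTE ba) andbF.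
  case: (eqVneq v b) => [->|vb] //=; exact: negbTE ab.
have := opt_lb vp'; rewrite fE.
have aF : a \in fixS p [set: V] by rewrite !inE pa eqxx.
have bF : b \in fixS p [set: V] :\ a by rewrite !inE pb eqxx ba.
have := cardsD1 a (fixS p [set: V]); rewrite aF /=.
have := cardsD1 b (fixS p [set: V] :\ a); rewrite bF /=.
move: op; abs_atoms; natlia.
Qed.

Definition mix O p q := fun v => if v \in O then p v else q v.

Lemma fix_split r O : #|fixS r [set: V]| = #|fixS r O| + #|fixS r (~: O)|.
Proof.
rewrite -(cardsID O (fixS r [set: V])); congr (_ + _); apply: eq_card => v;
  rewrite !inE; by case: (v \in O); rewrite ?andbT ?andbF.
Qed.

Lemma mix_opt O p q : Opt p -> Opt q ->
  (forall w, w \in O -> p w \in O /\ q w \in O) -> Opt (mix O p q).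
Proof.
move=> [[pp pv] op] [[qq qv] oq] cO.
have cC w : w \notin O -> q w \notin O.
  by move=> wO; apply/negP=> /cO[_]; rewrite qq (negbTE wO).
have vmix p1 q1 : (forall v, p1 (p1 v) = v) -> (forall v, p1 v != v -> ~~ E v (p1 v)) ->
   (forall v, q1 (q1 v) = v) -> (forall v, q1 v != v -> ~~ E v (q1 v)) ->
   (forall w, w \in O -> p1 w \in O) -> (forall w, w \notin O -> q1 w \notin O) ->
   valid (mix O p1 q1).
  move=> p1p p1v q1q q1v c1 c2; split.
    move=> v; rewrite /mix; case: (boolP (v \in O)) => vO.
      by rewrite c1 // p1p.
    by rewrite (negbTE (c2 _ vO)) q1q.
  by move=> v; rewrite /mix; case: (v \in O); [apply: p1v|apply: q1v].
have v1 : valid (mix O p q).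
  by apply: vmix => // w /cO[].
have v2 : valid (mix O q p).
  apply: vmix => //; first by move=> w /cO[].
  by move=> w wO; apply/negP=> /cO[+ _]; rewrite pp (negbTE wO).
split => //.
have e1 : #|fixS (mix O p q) [set: V]| + #|fixS (mix O q p) [set: V]| =
          #|fixS p [set: V]| + #|fixS q [set: V]|.
  rewrite !(fix_split _ O).
  have a1 : #|fixS (mix O p q) O| = #|fixS p O|.
    by apply: eq_card => v; rewrite !inE /mix; case: (boolP (v \in O)).
  have a2 : #|fixS (mix O p q) (~: O)| = #|fixS q (~: O)|.
    by apply: eq_card => v; rewrite !inE /mix; case: (boolP (v \in O)).
  have a3 : #|fixS (mix O q p) O| = #|fixS q O|.
    by apply: eq_card => v; rewrite !inE /mix; case: (boolP (v \in O)).
  have a4 : #|fixS (mix O q p) (~: O)| = #|fixS p (~: O)|.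
    by apply: eq_card => v; rewrite !inE /mix; case: (boolP (v \in O)).
  rewrite a1 a2 a3 a4; move: #|fixS p O| #|fixS q O| #|fixS p (~: O)| #|fixS q (~: O)| => a b c d.
  rewrite -!plusE; lia.
have := opt_lb v2; move: e1 op oq; abs_atoms; natlia.
Qed.


Lemma swapX p u v t : (forall w, exists q, Opt q /\ q w = w) ->
  Opt p -> p u = u -> p v = v -> u != v ->
  (exists p', [/\ Opt p', p' u = u & p' t = t]) \/
  (exists p', [/\ Opt p', p' v = v & p' t = t]).
Proof.
move=> F1 op pu pv uv.
have [q [oq qt]] := F1 t.
have pp := (op.1).1; have qq := (oq.1).1.
pose r := fun x => q (p x).
have gen a : p a = a -> ~~ fconnect r a t -> exists p', [/\ Opt p', p' a = a & p' t = t].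
  move=> pa nat; pose O := [set w | fconnect r a w].
  exists (mix O p q); split.
  - apply: mix_opt => // w; rewrite !inE => aw.
    by have [h1 h2] := orbit_closed pp qq pa aw.
  - by rewrite /mix inE connect0.
  - by rewrite /mix inE (negbTE nat).
case: (boolP (fconnect r u t)) => ut; last by left; apply: gen.
case: (boolP (fconnect r v t)) => vt; last by right; apply: gen.
exfalso; apply: (orbit_three pp qq pu pv uv qt) => //.
apply: connect_trans ut _; by rewrite (fconnect_sym (r_inj pp qq)).
Qed.

Definition Hrel := [rel a b : V | (a != b) && ~~ E a b].

Lemma gal_path (F1 : forall w, exists q, Opt q /\ q w = w) s v :
  forall u p, path Hrel u s -> last u s = v -> Opt p -> p u = u -> p v = v -> u = v.
Proof.
elim: s => [|t s IH] u p /=; first by move=> _ ->.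
move=> /andP[/andP[ut nut] pth] lst op pu pv.
case: (eqVneq u v) => // uv; exfalso.
have Euv := aug op pu pv uv.
have tv : t != v by apply: contraNneq nut => ->.
case: (swapX t F1 op pu pv uv) => [[p' [op' p'u p't]]|[p' [op' p'v p't]]].
  by move: nut; rewrite (aug op' p'u p't ut).
by move/eqP: tv; apply; apply: (IH t p').
Qed.

Lemma gallai (F1 : forall w, exists q, Opt q /\ q w = w)
  (conn : forall a b, connect Hrel a b) p : Opt p -> #|fixS p [set: V]| <= 1.
Proof.
move=> op; rewrite leqNgt; apply/negP=> /card_gt1P[u [v [uF vF uv]]].
move: uF vF; rewrite !inE => /eqP pu /eqP pv.
have /connectP[s pth lst] := conn u v.
by move/eqP: uv; apply; exact: (gal_path F1 pth (esym lst) op pu pv).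
Qed.

Lemma conn_of_nonsep : ~ separable G -> forall a b, connect Hrel a b.
Proof.
move=> ns a b; apply/idPn => nab; apply: ns.
exists [set w | connect Hrel a w]; split; [|split].
- by apply/set0Pn; exists a; rewrite inE connect0.
- by apply/set0Pn; exists b; rewrite !inE.
- move=> u w; rewrite !inE => au nw; apply/negPn/negP => nE.
  have uw : u != w by apply: contraNneq nw => <-.
  move/negP: nw; apply; apply: connect_trans au (connect1 _).
  by rewrite /= nE uw.
Qed.

End Gallai.

Lemma inMnat (a b c d : nat) :
  ((a:int) < b%:Z + 2 * (b%:Z - c%:Z) - d%:Z)%R = (a + d + 2*c < 3*b)%N.
Proof.
rewrite ltrBrDr mulrBr addrA ltrBrDr.
rewrite -[(2 * b%:Z)%R]/((2 * b)%N : int) -[(2 * c%:Z)%R]/((2 * c)%N : int).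
rewrite -!PoszD ltz_nat; congr (_ < _); rewrite mulSn; by [].
Qed.

Lemma fle (b c b' c' : nat) (y : int) :
  (b' + c <= b + c')%N -> (b%:Z - c%:Z <= y)%R -> (b'%:Z - c'%:Z <= y)%R.
Proof.
move=> h; apply: le_trans; rewrite lerBlDr addrAC lerBrDr -!PoszD lez_nat.
by [].
Qed.

Definition ind (G : sgraph) (R : {set 'I_(nv G)}) : sgraph.
Proof.
refine (@SGraph #|R| (fun i j => @adj G (enum_val i) (enum_val j)) _ _).
- by move=> i j; apply: adj_sym.
- by move=> i; apply: adj_irr.
Defined.

Lemma enum_val_im (T : finType) (R : {set T}) : (@enum_val T (mem R)) @: setT = R.
Proof.
apply/setP=> v; apply/imsetP/idP => [[i _ ->]|vR]; first exact: enum_valP.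
by exists (enum_rank_in vR v) => //; rewrite enum_rankK_in.
Qed.

Lemma indep1 (G : sgraph) (v : 'I_(nv G)) : indep [set v].
Proof. by move=> a b; rewrite !inE => /eqP-> /eqP->; rewrite adj_irr. Qed.

Section Main.
Variables (x y : int) (G : sgraph) (X : nat).
Local Notation n := (nv G).
Local Notation V := ('I_n).
Local Notation E := (@adj G).
Implicit Types (R I K : {set V}).
Local Notation chiT := (chiS [set: V]).
Local Notation clT := (clS [set: V]).

Hypothesis hX : x = Posz X.
Hypothesis hmin : forall G', inM x y G' -> nv G <= nv G'.
Hypothesis hy : (Posz chiT - Posz clT <= y)%R.
Hypothesis hM : n + X + 2 * clT < 3 * chiT.

Lemma shrink R : #|R| < n -> chiS R + clT <= chiT + clS R ->
  #|R| + X + 2 * clS R < 3 * chiS R -> False.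
Proof.
move=> Rn fR mR.
have [nvR chiR clR] := transfer (H := ind R) (@enum_val_inj _ _) (fun i j => erefl).
rewrite enum_val_im in nvR chiR clR.
have : inM x y (ind R).
  rewrite /inM /f chiR clR nvR hX inMnat; split => //.
  exact: fle fR hy.
by move/hmin; rewrite nvR leqNgt Rn.
Qed.

Lemma f_pos : clT < chiT.
Proof. have := hM; have := chiS_le_n [set: V]; natlia. Qed.

Lemma card_compl R : #|~: R| = n - #|R|.
Proof. by rewrite cardsCs setCK card_ord. Qed.

Lemma crit R : 0 < #|R| -> #|R| < n -> chiS R + clT < chiT + clS R.
Proof.
move Hm: #|R| => m; elim/ltn_ind: m R Hm => m IH R Hm m0 mn.
rewrite ltnNge; apply/negP=> fR.
case: (leqP (chiS R + clT) (chiT + clS R)) => fR'.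
  apply: (shrink (R := R)); rewrite ?Hm //.
  have := chiS_setT R; rewrite card_compl Hm.
  have := hM; move: fR fR' mn; natlia.
case: (leqP m 1) => m1.
  have c1 : chiS R <= 1 by apply: chiS_small; rewrite Hm.
  have [v vR] : exists v, v \in R by apply/card_gt0P; rewrite Hm.
  have := clS_pos vR; move: fR' c1 f_pos; natlia.
have [v vR] : exists v, v \in R by apply/card_gt0P; rewrite Hm ltnW.
have Hm' : #|R :\: [set v]| = m.-1.
  by rewrite -Hm (cardsD1 v R) vR add1n /= setDE.
have h := IH m.-1 (ltac:(by rewrite ltn_predL)) _ Hm' (ltac:(by rewrite -ltnS prednK)) (leq_ltn_trans (leq_pred m) mn).
have hi := @chiS_indep _ R [set v] (@indep1 _ v).
have hc := @clS_mono _ (R :\: [set v]) R (subsetDl _ _).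
move: hi hc fR' h; natlia.
Qed.

Lemma chiS0 R : #|R| = 0 -> chiS R = 0.
Proof.
move=> R0; apply/eqP; rewrite -leqn0; apply: chiS_min.
apply: (@colS_intro _ _ _ (fun _ => 0)) => [u|u v|u] uR; move: R0;
  by rewrite (cardD1 u) uR.
Qed.

Lemma n_ge2 : 2 <= n.
Proof.
have := f_pos; have := chiS_le_n [set: V].
case: (posnP n) => [n0|npos]; first natlia.
have := @clS_pos _ [set: V] (Ordinal npos) (in_setT _).
natlia.
Qed.

Lemma vtx (v : V) : chiS ([set: V] :\ v) + 1 = chiT /\ clS (setT :\ v) = clT.
Proof.
have cR : #|[set: V] :\ v| = n - 1.
  have := cardsD1 v [set: V]; rewrite in_setT cardsT card_ord add1n => e; by rewrite [in RHS]e subn1.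
have n2 := n_ge2.
have h3 : chiS ([set: V] :\ v) + clT < chiT + clS ([set: V] :\ v).
  by apply: crit; rewrite cR; natlia.
have := @chiS_indep _ [set: V] [set v] (@indep1 _ v).
have := @clS_indep _ [set: V] [set v] (@indep1 _ v).
have := @clS_mono _ ([set: V] :\ v) [set: V] (subsetT _).
move: h3; set a := chiS _; set b := clS _; set c := chiS ([set: V] :\ v); set d := clS ([set: V] :\ v); intros; split; natlia.
Qed.

Lemma alpha2 I : indep I -> #|I| <= 2.
Proof.
move=> Ii; rewrite leqNgt; apply/negP=> I3.
have hc := @chiS_indep _ [set: V] I Ii; have hw := @clS_indep _ [set: V] I Ii.
rewrite setTD in hc hw.
have cR := card_compl I.
have hm := @clS_mono _ (~: I) [set: V] (subsetT _).
have fp := f_pos.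
have hMM := hM.
have mI := max_card (mem I); rewrite card_ord in mI.
case: (posnP #|~: I|) => R0.
  rewrite (chiS0 R0) in hc.
  have [v _] : exists v : V, true by exists (Ordinal (leq_trans (isT : 0 < 2) n_ge2)).
  have := @clS_pos _ [set: V] v (in_setT _).
  move: hc fp; alia.
have Rn : #|~: I| < n by move: cR I3 mI; alia.
have hcr := @crit (~: I) R0 Rn.
apply: (@shrink (~: I)) => //; move: I3 mI hc hw cR hm fp hMM hcr R0; alia.
Qed.


Lemma F1 (w : V) : exists q, Opt q /\ q w = w.
Proof.
have [e1 _] := vtx w.
set R := [set: V] :\ w.
have [p [vp cp pout ct]] := inv_of_col alpha2 (chiS_col R).
have pw : p w = w by apply: pout; rewrite !inE eqxx.
exists p; split => //; split => //.
have cR : #|R| = n - 1.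
  have := cardsD1 w [set: V]; rewrite in_setT cardsT card_ord /= => e; by rewrite [in RHS]e subn1.
have eF : fixS p [set: V] :\ w = fixS p R by apply/setP=> v; rewrite !inE; case: (v == w).
have := cardsD1 w (fixS p [set: V]); rewrite !inE pw eqxx /= eF.
have := n_ge2.
move: ct e1 cR; abs_atoms; natlia.
Qed.

Lemma final (hsep : ~ separable G) :
  [/\ n + 1 = 2 * chiT, chiT = X + 2 * clT & forall I, indep I -> #|I| <= 2].
Proof.
have conn := conn_of_nonsep hsep.
have n2 := n_ge2.
set w0 : V := Ordinal (leq_trans (isT : 0 < 2) n2).
have [p [op pw0]] := F1 w0.
have f1 : #|fixS p [set: V]| <= 1 := gallai F1 conn op.
have f1' : 0 < #|fixS p [set: V]| by apply/card_gt0P; exists w0; rewrite !inE pw0 eqxx.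
have lb := opt_lb op.1.
have nchi : n + 1 = 2 * chiT by move: op.2 lb f1 f1'; abs_atoms; natlia.
split => //; last exact: alpha2.
have [pp pv] := op.1.
have fp := f_pos.
have cl1 : 1 <= clT := @clS_pos _ [set: V] w0 (in_setT _).
have [u0 pu0] : exists u, p u != u.
  case: (pickP (fun u => p u != u)) => [u h|h]; first by exists u.
  exfalso; have : #|fixS p [set: V]| = n.
    rewrite -[RHS]card_ord -cardsT; apply: eq_card => v; rewrite !inE /=; by have := h v; move/negbFE.
  by move: f1 fp nchi cl1; abs_atoms; natlia.
set I := [set u0; p u0].
have Ii : indep I.
  move=> a b; rewrite !inE => /orP[] /eqP-> /orP[] /eqP->; rewrite ?adj_irr //.
    exact: pv.
  by rewrite adj_sym; apply: pv.
have cI : #|I| = 2 by rewrite cards2 eq_sym pu0.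
set R := [set: V] :\: I.
have cR : #|R| = n - 2 by rewrite /R setTD card_compl cI.
have clR : pclosed p R.
  move=> v; rewrite !inE !andbT => /norP[v1 v2]; apply/norP; split.
    by apply: contra v2 => /eqP e; rewrite -e pp.
  by apply: contra v1 => /eqP/(congr1 p); rewrite !pp => ->.
have hci := chi_inv op.1 clR.
have fR : #|fixS p R| <= #|fixS p [set: V]|.
  by apply: subset_leq_card; apply/subsetP=> v; rewrite !inE => /andP[_ ->].
have hi := @chiS_indep _ [set: V] I Ii.
have hw := @clS_indep _ [set: V] I Ii.
have hm := @clS_mono _ R [set: V] (subsetT _).
have R0 : 0 < #|R| by rewrite cR; move: nchi fp cl1; abs_atoms; natlia.
have Rn : #|R| < n by rewrite cR; have := n2; natlia.
have hcr := crit R0 Rn.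
have hMM := hM.
case: (leqP (3 * chiS R) (#|R| + X + 2 * clS R)) => hs.
  move: hs hci fR hi hw hm hcr hMM nchi cR f1 fp cl1; rewrite -/R; abs_atoms; natlia.
exfalso; apply: (shrink (R := R)) => //; exact: ltnW.
Qed.

End Main.

Lemma intA (n c w X : nat) : n + 1 = 2 * c -> c = X + 2 * w ->
  (n:int) = (4 * ((c:int) - (w:int)) - 2 * (X:int) - 1)%R.
Proof.
move=> h1 h2; apply/eqP; rewrite eq_sym subr_eq subr_eq mulrBr subr_eq.
rewrite -[(4 * c%:Z)%R]/((4 * c)%N : int) -[(4 * w%:Z)%R]/((4 * w)%N : int).
rewrite -[(2 * X%:Z)%R]/((2 * X)%N : int) -!PoszD eqz_nat; apply/eqP.
rewrite -!plusE -!multE in h1 h2 *; lia.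
Qed.
Lemma intB (a b c d : nat) : (a:int) = ((b:int) - (c:int) - (d:int) + 1)%R -> a + c + d = b + 1.
Proof.
move=> h; apply/eqP; rewrite -eqz_nat !PoszD h.
rewrite addrAC [X in (X + _)%R]addrAC addrAC -[X in (X + _ + _)%R]addrA.
by rewrite addNr addr0 subrK.
Qed.

Theorem theorem3p1 (x y : int) (G0 : sgraph) :
  (0 <= x)%R ->
  (exists G, inM x y G) ->
  inM x y G0 ->
  (forall G, inM x y G -> nv G0 <= nv G) ->
  ~ separable G0 ->
  ((nv G0)%:Z = 4 * f G0 - 2 * x - 1)%R /\
  (forall r : nat, is_R3 (f G0 - x + 1)%R r -> (4 * f G0 - 2 * x - 1 < r%:Z)%R).
Proof.
case: x => [X|k] hx _ hM0 hmin hsep; last by [].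
have [_ chiE clE] := transfer (H := G0) (phi := id) (@inj_id _) (fun i j => erefl).
rewrite imset_id in chiE clE.
have [hn hy0] := hM0.
rewrite /f chiE clE in hn hy0.
rewrite inMnat in hn.
have [e1 e2 a2] := final (erefl (Posz X)) hmin hy0 hn hsep.
have hA : ((nv G0)%:Z = 4 * f G0 - 2 * (Posz X) - 1)%R.
  by rewrite /f chiE clE; apply: intA e1 e2.
split => // r [rok _].
rewrite -hA ltz_nat ltnNge; apply/negP => rn.
case: (rok G0 rn) => [[K [cK eK]]|[I [iI eI]]].
  have kle : #|K| <= cl G0 by apply: (leq_bigmax_cond K).
  rewrite /f chiE clE in eK; rewrite clE in kle.
  have := intB eK; move: kle e2; abs_atoms; natlia.
have : #|I| <= 2.
  apply: a2 => u v uI vI.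
  by move/forallP: iI => /(_ u)/implyP/(_ uI)/forallP/(_ v)/implyP/(_ vI).
by rewrite eI.
Qed.
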